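(* Let $R$ be a commutative ring, $M$ an $R$-module and $c$ a closure operation of finite type on $\mathrm{SMod}(M|R)$. Then $\mathrm{SMod}^c(M|R):=\{N\in\mathrm{SMod}(M|R)\mid N=N^c\}$, with the topology induced by the hull-kernel topology, is a spectral space; moreover, $\mathrm{SMod}^c(M|R)$ is closed in $\mathrm{SMod}(M|R)$ endowed with the constructible topology.
   Context: $\mathrm{SMod}(M|R)$ is the set of $R$-submodules of $M$; its hull-kernel topology has as subbasis of closed sets the sets $\boldsymbol V(x_1,\dots,x_m):=\{N\mid x_1,\dots,x_m\in N\}$ for finite $\{x_1,\dots,x_m\}\subseteq M$; with it, $\mathrm{SMod}(M|R)$ is spectral. A closure operation on $\mathrm{SMod}(M|R)$ is a map $N\mapsto N^c$ that is extensive ($N\subseteq N^c$), order-preserving and idempotent; it is of finite type if $N^c=\bigcup\{L^c\mid L\subseteq N,\ L \text{ finitely generated submodule}\}$ for all $N$. The constructible topology on a spectral space $X$ is the coarsest topology for which all quasi-compact open subsets of $X$ are clopen. *)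

(* Defs.v *)
From Stdlib Require List.
From HB Require Import structures.
From mathcomp Require Import all_boot all_order all_algebra.
Set Implicit Arguments. Unset Strict Implicit. Unset Printing Implicit Defensive.
Import GRing.Theory.
Local Open Scope ring_scope.

Definition topology (X : Type) := (X -> Prop) -> Prop.

Definition is_topology (X : Type) (T : topology X) : Prop :=
  [/\ T (fun _ => True),
      (forall C : (X -> Prop) -> Prop, (forall U, C U -> T U) ->
         T (fun x => exists U, C U /\ U x)),
      (forall U V, T U -> T V -> T (fun x => U x /\ V x)) &
      (forall U V, (forall x, U x <-> V x) -> T U -> T V)].

Definition generated (X : Type) (S : (X -> Prop) -> Prop) : topology X :=
  fun U => forall T : topology X, is_topology T -> (forall V, S V -> T V) -> T U.

Definition closed_in (X : Type) (T : topology X) (C : X -> Prop) : Prop :=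
  T (fun x => ~ C x).

Definition quasi_compact (X : Type) (T : topology X) (K : X -> Prop) : Prop :=
  forall C : (X -> Prop) -> Prop, (forall U, C U -> T U) ->
    (forall x, K x -> exists U, C U /\ U x) ->
    exists s : seq (X -> Prop), (forall U, List.In U s -> C U) /\
      (forall x, K x -> exists U, List.In U s /\ U x).

Definition irreducible (X : Type) (T : topology X) (Z : X -> Prop) : Prop :=
  (exists x, Z x) /\
  forall C1 C2, closed_in T C1 -> closed_in T C2 ->
    (forall x, Z x -> C1 x \/ C2 x) ->
    (forall x, Z x -> C1 x) \/ (forall x, Z x -> C2 x).

Definition pt_closure (X : Type) (T : topology X) (x : X) : X -> Prop :=
  fun y => forall C, closed_in T C -> C x -> C y.

(* spectral space (Hochster / Stacks Project, Tag 08YG): quasi-compact, sober,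
   quasi-compact opens closed under finite intersections and forming a basis *)
Definition spectral (X : Type) (T : topology X) : Prop :=
  [/\ is_topology T,
      quasi_compact T (fun _ => True),
      (forall Z, closed_in T Z -> irreducible T Z ->
         exists! x : X, forall y, Z y <-> pt_closure T x y),
      (forall U V, T U -> quasi_compact T U -> T V -> quasi_compact T V ->
         quasi_compact T (fun x => U x /\ V x)) &
      (forall U x, T U -> U x ->
         exists W, [/\ T W, quasi_compact T W, W x & forall y, W y -> U y])].

(* constructible topology: coarsest topology in which every quasi-compact
   open set of T is clopen *)
Definition constructible (X : Type) (T : topology X) : topology X :=
  generated (fun U => (T U /\ quasi_compact T U) \/
    exists V, [/\ T V, quasi_compact T V & forall x, U x <-> ~ V x]).

Definition subspace (X : Type) (T : topology X) (P : X -> Prop)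
  : topology {x : X | P x} :=
  fun U => exists V, T V /\ forall y : {x : X | P x}, U y <-> V (proj1_sig y).

Record submod (R : pzRingType) (M : lmodType R) := Submod {
  smem :> M -> Prop;
  smem0 : smem 0;
  smemD : forall x y, smem x -> smem y -> smem (x + y);
  smemZ : forall (a : R) x, smem x -> smem (a *: x) }.

Definition subm (R : pzRingType) (M : lmodType R) (N L : submod M) : Prop :=
  forall x, N x -> L x.

Definition span_of (R : pzRingType) (M : lmodType R) (s : seq M) (x : M) : Prop :=
  exists f : nat -> R, x = \sum_(i < size s) f i *: s`_i.

Definition fin_gen (R : pzRingType) (M : lmodType R) (L : submod M) : Prop :=
  exists s : seq M, forall x, L x <-> span_of s x.

Definition closure_operation (R : pzRingType) (M : lmodType R)
  (c : submod M -> submod M) : Prop :=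
  [/\ (forall N, subm N (c N)),
      (forall N L, subm N L -> subm (c N) (c L)) &
      (forall N, c (c N) = c N)].

Definition finite_type (R : pzRingType) (M : lmodType R)
  (c : submod M -> submod M) : Prop :=
  forall N x, c N x <-> exists L : submod M, [/\ fin_gen L, subm L N & c L x].

Definition V_of (R : pzRingType) (M : lmodType R) (s : seq M) : submod M -> Prop :=
  fun N => forall x, List.In x s -> N x.

Definition hull_kernel (R : pzRingType) (M : lmodType R) : topology (submod M) :=
  generated (fun U => exists s : seq M, forall N, U N <-> ~ V_of s N).

Definition closed_smod (R : pzRingType) (M : lmodType R)
  (c : submod M -> submod M) : submod M -> Prop :=
  fun N => N = c N.

Arguments hull_kernel {R} M.
Arguments subspace {X} T P.

(* Main.v *)
Require Import Defs.
From HB Require Import structures.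
From mathcomp Require Import all_boot all_order all_algebra.
From mathcomp Require classical_sets.

Lemma zorn_sets (T : Type) (P : (T -> Prop) -> Prop) :
 (forall F : (T->Prop)->Prop, (forall G, F G -> P G) ->
   (forall G1 G2, F G1 -> F G2 -> (forall z, G1 z -> G2 z) \/ (forall z, G2 z -> G1 z)) ->
   P (fun z => exists G, F G /\ G z)) ->
 exists A, P A /\ forall B, (forall z, A z -> B z) -> ~(forall z, B z -> A z) -> ~ P B.
Proof.
move=> H.
have H2 : forall F : (T->Prop)->Prop, (forall G, F G -> P G) ->
    classical_sets.total_on F classical_sets.subset ->
    P (classical_sets.bigcup F id).
  move=> F FP Ftot.
  have E : (fun z => exists G, F G /\ G z) = classical_sets.bigcup F id.
    apply: boolp.funext => z; apply: boolp.propext; split.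
      by move=> [G [FG Gz]]; exists G.
    by move=> [G FG Gz]; exists G.
  rewrite -E; exact: H F FP Ftot.
have [A [PA HA]] := @classical_sets.Zorn_bigcup T P H2.
exists A; split => // B AB BA; apply: HA; split; [exact AB| exact BA].
Qed.

From Stdlib Require Import Classical.
Set Implicit Arguments. Unset Strict Implicit.
Import GRing.Theory.

Lemma gen_top (X : Type) (S : (X -> Prop) -> Prop) : is_topology (generated S).
Proof.
split.
- by move=> T [H1 H2 H3 H4] _.
- move=> C HC T HT HS; case: (HT) => _ H2 _ _; apply: H2 => U CU; exact: HC U CU T HT HS.
- move=> U V HU HV T HT HS; case: (HT) => _ _ H3 _; apply: H3; [exact: HU|exact: HV].
- move=> U V E HU T HT HS; case: (HT) => _ _ _ H4; apply: (H4 U) => //; exact: HU.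
Qed.

Lemma gen_sub (X : Type) (S : (X -> Prop) -> Prop) U : S U -> generated S U.
Proof. by move=> SU T _ HS; apply: HS. Qed.

Lemma top_ext (X : Type) (T : topology X) U V : is_topology T ->
  (forall x, U x <-> V x) -> T U -> T V.
Proof. by move=> [_ _ _ H4] E; apply: H4. Qed.

Lemma top_all (X : Type) (T : topology X) : is_topology T -> T (fun _ => True).
Proof. by case. Qed.

Lemma top_inter (X : Type) (T : topology X) U V : is_topology T -> T U -> T V ->
  T (fun x => U x /\ V x).
Proof. by move=> [_ _ H3 _]; apply: H3. Qed.

Lemma top_union (X : Type) (T : topology X) (C : (X -> Prop) -> Prop) : is_topology T ->
  (forall U, C U -> T U) -> T (fun x => exists U, C U /\ U x).
Proof. by move=> [_ H2 _ _]; apply: H2. Qed.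

Lemma qc_ext (X : Type) (T : topology X) K K' :
  (forall x, K x <-> K' x) -> quasi_compact T K -> quasi_compact T K'.
Proof.
move=> E HK C HC Hcov.
have [s [s1 s2]] := HK C HC (fun x Kx => Hcov x (proj1 (E x) Kx)).
exists s; split => // x Kx; apply: s2; exact: (proj2 (E x) Kx).
Qed.

Lemma qc_union_aux (X : Type) (T : topology X) (l : list (X -> Prop)) :
  (forall A, List.In A l -> quasi_compact T A) ->
  forall C, (forall U, C U -> T U) ->
  (forall x, (exists A, List.In A l /\ A x) -> exists U, C U /\ U x) ->
  exists s : seq (X -> Prop), (forall U, List.In U s -> C U) /\
    (forall x, (exists A, List.In A l /\ A x) -> exists U, List.In U s /\ U x).
Proof.
elim: l => [|A l IH] Hl C HC Hcov.
  by exists [::]; split => // x [A [[] _]].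
have HA : quasi_compact T A by apply: Hl; left.
have [s1 [s11 s12]] := HA C HC (fun x Ax => Hcov x (ex_intro _ A (conj (or_introl erefl) Ax))).
have Hc2 : forall x, (exists B, List.In B l /\ B x) -> exists U, C U /\ U x.
  by move=> x [B [Hb Bx]]; apply: Hcov; exists B; split => //; by right.
have [s2 [s21 s22]] := IH (fun B Hb => Hl B (or_intror Hb)) C HC Hc2.
exists (s1 ++ s2); split.
  by move=> U /List.in_app_iff [H|H]; [apply: s11|apply: s21].
move=> x [B [Hb Bx]]; case: Hb => [E|Hb].
  subst B; have [U [HU Ux]] := s12 x Bx; exists U; split => //; apply/List.in_app_iff; left => //.
have [U [HU Ux]] := s22 x (ex_intro _ B (conj Hb Bx)); exists U; split => //;
  apply/List.in_app_iff; right => //.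
Qed.

Lemma qc_union (X : Type) (T : topology X) (l : list (X -> Prop)) K :
  (forall A, List.In A l -> quasi_compact T A) ->
  (forall x, K x <-> exists A, List.In A l /\ A x) -> quasi_compact T K.
Proof.
move=> Hl E C HC Hcov.
have [s [s1 s2]] := qc_union_aux Hl HC (fun x H => Hcov x (proj2 (E x) H)).
exists s; split => // x Kx; apply: s2; exact: proj1 (E x) Kx.
Qed.

Lemma list_choice (A B : Type) (R : A -> B -> Prop) (L : list A) :
  (forall a, List.In a L -> exists b, R a b) ->
  exists l : list B, (forall b, List.In b l -> exists a, List.In a L /\ R a b) /\
     (forall a, List.In a L -> exists b, List.In b l /\ R a b).
Proof.
elim: L => [|a L IH] H.
  by exists [::]; split => // b [].
have [b Rb] := H a (or_introl erefl).
have [l [l1 l2]] := IH (fun a' Ha' => H a' (or_intror Ha')).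
exists (b :: l); split.
  move=> b' [<-|Hb']; first by exists a; split=> //; left.
  have [a' [Ha' R']] := l1 b' Hb'; exists a'; split => //; by right.
move=> a' [<-|Ha']; first by exists b; split => //; left.
have [b' [Hb' R']] := l2 a' Ha'; exists b'; split => //; by right.
Qed.

Lemma subspace_top (X : Type) (T : topology X) (P : X -> Prop) :
  is_topology T -> is_topology (subspace T P).
Proof.
move=> HT; split.
- exists (fun _ => True); split => //; exact: top_all.
- move=> C HC.
  exists (fun x => exists V, (exists U, C U /\ T V /\ forall y, U y <-> V (proj1_sig y)) /\ V x).
  split.
    apply: top_union => // V [U [_ [TV _]]] //.
  move=> y; split.
    move=> [U [CU Uy]]; have [V [TV EV]] := HC U CU.
    exists V; split; last by apply/EV.
    by exists U.
  move=> [V [[U [CU [TV EV]]] Vy]]; exists U; split => //; exact/EV.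
- move=> U V [U' [TU EU]] [V' [TV EV]]; exists (fun x => U' x /\ V' x); split.
    exact: top_inter.
  by move=> y; rewrite EU EV.
- move=> U V E [U' [TU EU]]; exists U'; split => // y; rewrite -EU; exact: iff_sym (E y).
Qed.

Definition bo (R : pzRingType) (M : lmodType R) (t : seq M) : submod M -> Prop :=
  fun N => forall x, List.In x t -> ~ N x.

Lemma submod_ext (R : pzRingType) (M : lmodType R) (N L : submod M) :
  (forall x, N x <-> L x) -> N = L.
Proof.
case: N => n n0 nD nZ; case: L => l l0 lD lZ /= E.
have el : n = l by apply: boolp.funext => x; apply: boolp.propext; exact: E.
subst l; congr Submod; apply: boolp.Prop_irrelevance.
Qed.

Lemma hull_top (R : pzRingType) (M : lmodType R) : is_topology (hull_kernel M).
Proof. exact: gen_top. Qed.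
Arguments hull_top {R} M.

Lemma D1_open (R : pzRingType) (M : lmodType R) (x : M) :
  hull_kernel M (fun N => ~ N x).
Proof.
apply: gen_sub; exists [:: x] => N; split.
  by move=> Nx H; apply: Nx; apply: H; left.
move=> H Nx; apply: H => y [<-|[]] //.
Qed.

Lemma Ds_open (R : pzRingType) (M : lmodType R) (s : seq M) :
  hull_kernel M (fun N => ~ V_of s N).
Proof. by apply: gen_sub; exists s. Qed.

Lemma bo_open (R : pzRingType) (M : lmodType R) (t : seq M) : hull_kernel M (bo t).
Proof.
elim: t => [|x t IH].
  apply: (top_ext (hull_top M) (U := fun _ => True)); last exact: top_all (hull_top M).
  by move=> N; split => // _ y [].
apply: (@top_ext _ (hull_kernel M) (fun N : submod M => ~ N x /\ bo t N) (bo (x :: t)) (hull_top M)); last first.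
  by apply: top_inter (hull_top M) (D1_open x) IH.
move=> N; split.
  by move=> [H1 H2] y [<-|Hy] //; apply: H2.
move=> H; split; first by apply: H; left.
by move=> y Hy; apply: H; right.
Qed.

Lemma bo_app (R : pzRingType) (M : lmodType R) (t1 t2 : seq M) N :
  bo (t1 ++ t2) N <-> bo t1 N /\ bo t2 N.
Proof.
split.
  by move=> H; split => y Hy; apply: H; apply/List.in_app_iff; [left|right].
by move=> [H1 H2] y /List.in_app_iff [Hy|Hy]; [apply: H1|apply: H2].
Qed.

Lemma hull_basis (R : pzRingType) (M : lmodType R) (U : submod M -> Prop) N :
  hull_kernel M U -> U N -> exists t, bo t N /\ forall N', bo t N' -> U N'.
Proof.
move=> HU; move: N; apply: (HU (fun U => forall N, U N -> exists t, bo t N /\ forall N', bo t N' -> U N')).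
- split.
  + by move=> N _; exists [::]; split => // N' _.
  + move=> C HC N [U' [CU U'N]]; have [t [t1 t2]] := HC U' CU N U'N.
    by exists t; split => // N' H; exists U'; split => //; apply: t2.
  + move=> U1 U2 H1 H2 N [U1N U2N].
    have [t [t1 t2]] := H1 N U1N; have [t' [t1' t2']] := H2 N U2N.
    exists (t ++ t'); split; first by apply/bo_app.
    by move=> N' /bo_app [B1 B2]; split; [apply: t2|apply: t2'].
  + move=> U1 U2 E H N /E /H [t [t1 t2]]; exists t; split => // N' /t2; exact: (proj1 (E N')).
- move=> V [s Hs] N /Hs VN.
  have [x [xs Nx]] : exists x, List.In x s /\ ~ N x.
    apply: NNPP => H; apply: VN => x xs; apply: NNPP => Nx; apply: H; by exists x.
  exists [:: x]; split; first by move=> y [<-|[]].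
  move=> N' H; apply/Hs => HV; apply: (H x); [by left| exact: HV].
Qed.

Lemma In_mem (T : eqType) (x : T) (s : seq T) : List.In x s <-> x \in s.
Proof.
elim: s => [|y s IH] /=; first by split.
rewrite in_cons; split.
  by move=> [->|H]; apply/orP; [left|right; apply/IH].
by move=> /orP [/eqP ->|H]; [left|right; apply/IH].
Qed.

Lemma span_sub (R : pzRingType) (M : lmodType R) (s : seq M) (N : submod M) x :
  (forall z, List.In z s -> N z) -> span_of s x -> N x.
Proof.
move=> H [f ->]; apply: (big_ind (fun v => N v)).
- exact: smem0.
- exact: smemD.
- move=> i _; apply: smemZ; apply: H; apply/In_mem; exact: mem_nth.
Qed.

Lemma span_self (R : pzRingType) (M : lmodType R) (s : seq M) z :
  List.In z s -> span_of s z.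
Proof.
move=> /In_mem zs.
have Hk : index z s < size s by rewrite index_mem.
exists (fun i => if i == index z s then 1%R else 0%R).
rewrite (bigD1 (Ordinal Hk)) //= eqxx scale1r nth_index // big1 ?addr0 //.
move=> i Hi; have -> : (nat_of_ord i == index z s) = false.
  apply/negbTE; apply: contra Hi => /eqP E; apply/eqP; exact: val_inj.
by rewrite scale0r.
Qed.

Definition span_sm (R : pzRingType) (M : lmodType R) (s : seq M) : submod M.
Proof.
refine (@Submod R M (span_of s) _ _ _).
- exists (fun _ => 0%R); rewrite big1 // => i _; by rewrite scale0r.
- move=> x y [f ->] [g ->]; exists (fun i => (f i + g i)%R).
  rewrite -big_split /=; apply: eq_bigr => i _; by rewrite scalerDl.
- move=> a x [f ->]; exists (fun i => (a * f i)%R).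
  rewrite scaler_sumr; apply: eq_bigr => i _; by rewrite scalerA.
Defined.

Lemma id_closure (R : pzRingType) (M : lmodType R) :
  closure_operation (fun N : submod M => N).
Proof. split; [by move=> N x|by move=> N L H|by []]. Qed.

Lemma id_ft (R : pzRingType) (M : lmodType R) :
  finite_type (fun N : submod M => N).
Proof.
move=> N x; split.
  move=> Nx; exists (span_sm [:: x]); split.
  - by exists [:: x].
  - move=> y /= Hy; apply: span_sub Hy => z [<-|[]] //.
  - by apply: span_self; left.
by move=> [L [_ LN Lx]]; apply: LN.
Qed.

Lemma list_split (T : Type) (P Q : T -> Prop) (S : seq T) :
  (forall z, List.In z S -> P z \/ Q z) ->
  exists S', (forall z, List.In z S' -> P z) /\ forall z, List.In z S -> List.In z S' \/ Q z.
Proof.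
elim: S => [|a S IH] H; first by exists [::]; split => // z [].
have [S' [H1 H2]] := IH (fun z Hz => H z (or_intror Hz)).
case: (H a (or_introl erefl)) => Ha.
  exists (a :: S'); split.
    by move=> z [<-|Hz] //; apply: H1.
  move=> z [<-|Hz]; first by left; left.
  by case: (H2 z Hz) => [?|?]; [left; right|right].
exists S'; split => // z [<-|Hz]; first by right.
exact: H2.
Qed.

Lemma CC (R : pzRingType) (M : lmodType R) (c : submod M -> submod M)
  (t : seq M) (U : seq M -> Prop) :
  closure_operation c -> finite_type c ->
  (forall N, N = c N -> bo t N -> exists u, U u /\ bo u N) ->
  exists L : seq (seq M), (forall u, List.In u L -> U u) /\
   (forall N, N = c N -> bo t N -> exists u, List.In u L /\ bo u N).
Proof.
move=> [cext cmono cidem] ft Hcov; apply: NNPP => Hno.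
have Hfin : forall L, (forall u, List.In u L -> U u) -> exists N : submod M,
    N = c N /\ bo t N /\ forall u, List.In u L -> exists x, List.In x u /\ N x.
  move=> L HL; apply: NNPP => H; apply: Hno; exists L; split => // N HN Nt.
  apply: NNPP => H2; apply: H; exists N; split => //; split => // u Hu.
  apply: NNPP => H3; apply: H2; exists u; split => // x xu Nx; apply: H3; exists x; split => //.
pose good := fun G : M -> Prop => forall (L : seq (seq M)) (S : seq M),
  (forall u, List.In u L -> U u) -> (forall z, List.In z S -> G z) ->
  exists N : submod M, N = c N /\ bo t N /\ (forall z, List.In z S -> N z) /\
    forall u, List.In u L -> exists x, List.In x u /\ N x.
have [A [goodA maxA]] : exists A, good A /\ forall B, (forall z, A z -> B z) ->
    ~(forall z, B z -> A z) -> ~ good B.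
  apply: zorn_sets => F Fgood Ftot L S HL HS.
  have [G [HG GS]] : exists G, (F G \/ forall z, ~ G z) /\ forall z, List.In z S -> G z.
    elim: S HS => [|a S IH] HS.
      exists (fun _ => False); split; [by right => z [] | by move=> z []].
    have [G [HG GS]] := IH (fun z Hz => HS z (or_intror Hz)).
    have [Ga [FGa Gaa]] := HS a (or_introl erefl).
    case: HG => [FG|G0].
      case: (Ftot _ _ FGa FG) => Hsub.
        by exists G; split; [left|move=> z [<-|Hz]; [apply: Hsub|apply: GS]].
      by exists Ga; split; [left|move=> z [<-|Hz]; [|apply: Hsub; apply: GS]].
    exists Ga; split; first by left.
    by move=> z [<-|Hz] //; exfalso; apply: (G0 z); apply: GS.
  case: HG => [FG|G0]; first exact: Fgood G FG L S HL GS.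
  have [N [HN [Nt NL]]] := Hfin L HL.
  by exists N; split => //; split => //; split => // z /GS /G0.
have maxA' : forall w, good (fun z => A z \/ z = w) -> A w.
  move=> w Hg; apply: NNPP => Aw; apply: (maxA _ _ _ Hg); first by move=> z Az; left.
  by move=> H; apply: Aw; apply: H; right.
have ext_good : forall w S0, (forall z, List.In z S0 -> A z) ->
    (forall N : submod M, (forall z, List.In z S0 -> N z) -> N w) ->
    good (fun z => A z \/ z = w).
  move=> w S0 HS0 Hw L S HL HS.
  have [S' [S'A HS']] := list_split HS.
  have HS'' : forall z, List.In z (S' ++ S0) -> A z.
    by move=> z /List.in_app_iff [?|?]; [apply: S'A|apply: HS0].
  have [N [HN [Nt [NS NL]]]] := goodA L (S' ++ S0) HL HS''.
  exists N; split => //; split => //; split => // z /HS' [Hz|->].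
    by apply: NS; apply/List.in_app_iff; left.
  by apply: Hw => z' Hz'; apply: NS; apply/List.in_app_iff; right.
have A0 : A 0%R.
  apply: maxA'; apply: (ext_good _ [::]) => // N _; exact: smem0.
have AD : forall x y, A x -> A y -> A (x + y)%R.
  move=> x y Ax Ay; apply: maxA'; apply: (ext_good _ [:: x; y]).
    by move=> z [<-|[<-|[]]].
  by move=> N HN; apply: smemD; apply: HN; [left|right; left].
have AZ : forall (a : R) x, A x -> A (a *: x)%R.
  move=> a x Ax; apply: maxA'; apply: (ext_good _ [:: x]).
    by move=> z [<-|[]].
  by move=> N HN; apply: smemZ; apply: HN; left.
pose Asub := @Submod R M A A0 AD AZ.
have meet : forall u, U u -> exists x, List.In x u /\ A x.
  move=> u Uu; apply: NNPP => Hn.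
  have nA : forall x, List.In x u -> ~ A x.
    by move=> x xu Ax; apply: Hn; exists x.
  pose Rb := fun (x : M) (p : seq (seq M) * seq M) =>
    (forall u', List.In u' p.1 -> U u') /\ (forall z, List.In z p.2 -> A z \/ z = x) /\
    ~ exists N : submod M, N = c N /\ bo t N /\ (forall z, List.In z p.2 -> N z) /\
       forall u', List.In u' p.1 -> exists x, List.In x u' /\ N x.
  have HR : forall x, List.In x u -> exists p, Rb x p.
    move=> x xu; apply: NNPP => Hnp.
    apply: (nA x xu); apply: maxA' => L S HL HS; apply: NNPP => Hne.
    by apply: Hnp; exists (L, S).
  have [l [l1 l2]] := list_choice HR.
  pose L' := u :: List.flat_map fst l.
  pose Sall := List.flat_map snd l.
  have HSall : forall z, List.In z Sall -> A z \/ List.In z u.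
    move=> z /List.in_flat_map [b [bl zb]].
    have [a [au [_ [Hb _]]]] := l1 b bl.
    by case: (Hb z zb) => [?|->]; [left|right].
  have [S' [S'A HS']] := list_split HSall.
  have HL' : forall u', List.In u' L' -> U u'.
    move=> u' [<-|/List.in_flat_map [b [bl ub]]] //.
    have [a [au [Hb _]]] := l1 b bl; exact: Hb.
  have [N [HN [Nt [NS NL]]]] := goodA L' S' HL' S'A.
  have [x0 [x0u Nx0]] := NL u (or_introl erefl).
  have [b [bl [Hb1 [Hb2 Hb3]]]] := l2 x0 x0u.
  apply: Hb3; exists N; split => //; split => //; split.
    move=> z zb; case: (Hb2 z zb) => [Az|->] //.
    have zS : List.In z Sall by apply/List.in_flat_map; exists b.
    case: (HS' z zS) => [zS'|zu]; first exact: NS.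
    by exfalso; apply: (nA z zu).
  move=> u' u'b; apply: NL; right; apply/List.in_flat_map; exists b; split => //.
have N0c : c Asub = c (c Asub) by rewrite cidem.
have N0t : bo t (c Asub).
  move=> x xt cx; have [L [[s Hs] LA Lx]] := proj1 (ft Asub x) cx.
  have sA : forall z, List.In z s -> A z.
    by move=> z zs; apply: (LA z); apply/Hs; apply: span_self.
  have [N1 [HN1 [Nt1 [NS1 _]]]] := goodA [::] s (fun _ (H : List.In _ [::]) => match H with end) sA.
  apply: (Nt1 x xt); rewrite HN1; apply: (cmono L N1) => // y /Hs; exact: span_sub.
have [u1 [Uu1 bu1]] := Hcov _ N0c N0t.
have [x1 [xu1 Ax1]] := meet u1 Uu1.
by apply: (bu1 x1 xu1); apply: cext.
Qed.

Lemma sig_eq (A : Type) (P : A -> Prop) (a b : {x | P x}) :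
  proj1_sig a = proj1_sig b -> a = b.
Proof.
case: a => a Pa; case: b => b Pb /= E; subst b; congr exist; exact: boolp.Prop_irrelevance.
Qed.

Lemma qc_hull_bo (R : pzRingType) (M : lmodType R) (t : seq M) :
  quasi_compact (hull_kernel M) (bo t).
Proof.
move=> C HC Hcov.
pose U' := fun u : seq M => exists V, C V /\ forall N, bo u N -> V N.
have Hc : forall N : submod M, N = N -> bo t N -> exists u, U' u /\ bo u N.
  move=> N _ Nt; have [V [CV VN]] := Hcov N Nt.
  have [u [bu Hu]] := hull_basis (HC V CV) VN.
  by exists u; split => //; exists V.
have [L [L1 L2]] := @CC R M (fun N => N) t U' (@id_closure R M) (@id_ft R M) Hc.
have [s [s1 s2]] := list_choice L1.
exists s; split.
  by move=> V /s1 [u [_ [CV _]]].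
move=> N Nt; have [u [uL bu]] := L2 N erefl Nt.
have [V [Vs [_ HV]]] := s2 u uL.
by exists V; split => //; apply: HV.
Qed.

Lemma W_open (R : pzRingType) (M : lmodType R) (c : submod M -> submod M) (t : seq M) :
  subspace (hull_kernel M) (closed_smod c) (fun y => bo t (proj1_sig y)).
Proof. by exists (bo t); split => //; exact: bo_open. Qed.

Lemma X_basis (R : pzRingType) (M : lmodType R) (c : submod M -> submod M) U y :
  subspace (hull_kernel M) (closed_smod c) U -> U y ->
  exists t, bo t (proj1_sig y) /\ forall y', bo t (proj1_sig y') -> U y'.
Proof.
move=> [V [HV EV]] /EV Vy.
have [t [bt Ht]] := hull_basis HV Vy.
by exists t; split => // y' /Ht /EV.
Qed.

Lemma qc_X_W (R : pzRingType) (M : lmodType R) (c : submod M -> submod M) (t : seq M) :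
  closure_operation c -> finite_type c ->
  quasi_compact (subspace (hull_kernel M) (closed_smod c)) (fun y => bo t (proj1_sig y)).
Proof.
move=> cl ft C HC Hcov.
pose U' := fun u : seq M => exists V, C V /\ forall y, bo u (proj1_sig y) -> V y.
have Hc : forall N, N = c N -> bo t N -> exists u, U' u /\ bo u N.
  move=> N HN Nt.
  have [V [CV Vy]] := Hcov (exist (closed_smod c) N HN) Nt.
  have [u [bu Hu]] := X_basis (HC V CV) Vy.
  by exists u; split => //; exists V.
have [L [L1 L2]] := CC cl ft Hc.
have [s [s1 s2]] := list_choice L1.
exists s; split.
  by move=> V /s1 [u [_ [CV _]]].
move=> y yt; have [u [uL bu]] := L2 (proj1_sig y) (proj2_sig y) yt.
have [V [Vs [_ HV]]] := s2 u uL.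
by exists V; split => //; apply: HV.
Qed.

Lemma qc_X_union (R : pzRingType) (M : lmodType R) (c : submod M -> submod M)
  (L : seq (seq M)) :
  closure_operation c -> finite_type c ->
  quasi_compact (subspace (hull_kernel M) (closed_smod c))
    (fun y => exists u, List.In u L /\ bo u (proj1_sig y)).
Proof.
move=> cl ft.
apply: (qc_union (l := List.map (fun u y => bo u (proj1_sig y)) L)).
  move=> A /List.in_map_iff [u [<- _]]; exact: qc_X_W.
move=> y; split.
  move=> [u [uL bu]]; exists (fun y => bo u (proj1_sig y)); split => //.
  by apply/List.in_map_iff; exists u.
by move=> [A [/List.in_map_iff [u [<- uL]] Ay]]; exists u.
Qed.

Lemma qc_char (R : pzRingType) (M : lmodType R) (c : submod M -> submod M) U :
  subspace (hull_kernel M) (closed_smod c) U ->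
  quasi_compact (subspace (hull_kernel M) (closed_smod c)) U ->
  exists L : seq (seq M), forall y, U y <-> exists u, List.In u L /\ bo u (proj1_sig y).
Proof.
move=> HU qU.
pose C := fun K : {x : submod M | closed_smod c x} -> Prop => exists u, (forall y, K y <-> bo u (proj1_sig y)) /\
   forall y, bo u (proj1_sig y) -> U y.
have HC : forall K, C K -> subspace (hull_kernel M) (closed_smod c) K.
  move=> K [u [Eu _]]; apply: (top_ext (subspace_top _ (hull_top M))
     (U := fun y => bo u (proj1_sig y))); last exact: W_open.
  by move=> y; rewrite Eu.
have Hcov : forall y, U y -> exists K, C K /\ K y.
  move=> y Uy; have [t [bt Ht]] := X_basis HU Uy.
  by exists (fun y => bo t (proj1_sig y)); split => //; exists t; split.
have [s [s1 s2]] := qU C HC Hcov.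
have [L [L1 L2]] := list_choice s1.
exists L => y; split.
  move=> /s2 [K [Ks Ky]]; have [u [uL [Eu _]]] := L2 K Ks.
  by exists u; split => //; apply/Eu.
move=> [u [uL bu]]; have [K [Ks [Eu HU']]] := L1 u uL; exact: HU'.
Qed.

Lemma closed_single (R : pzRingType) (M : lmodType R) (c : submod M -> submod M) (x : M) :
  closed_in (subspace (hull_kernel M) (closed_smod c)) (fun y => proj1_sig y x).
Proof. by exists (fun N => ~ N x); split => //; exact: D1_open. Qed.

Lemma closed_list (R : pzRingType) (M : lmodType R) (c : submod M -> submod M) (t : seq M) :
  closed_in (subspace (hull_kernel M) (closed_smod c))
    (fun y => exists x, List.In x t /\ proj1_sig y x).
Proof.
exists (bo t); split; first exact: bo_open.
move=> y; split.
  by move=> H x xt yx; apply: H; exists x.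
by move=> H [x [xt yx]]; exact: H x xt yx.
Qed.

Lemma irr_list (R : pzRingType) (M : lmodType R) (c : submod M -> submod M) Z (t : seq M) :
  irreducible (subspace (hull_kernel M) (closed_smod c)) Z ->
  (forall y, Z y -> exists x, List.In x t /\ proj1_sig y x) ->
  exists x, List.In x t /\ forall y, Z y -> proj1_sig y x.
Proof.
move=> [[y0 Zy0] Hirr]; elim: t => [|x t IH] H.
  by have [x [[] _]] := H y0 Zy0.
case: (Hirr (fun y => proj1_sig y x) (fun y => exists x, List.In x t /\ proj1_sig y x)
   (closed_single c x) (closed_list c t)).
- move=> y /H [x' [[<-|x't] yx']]; [by left| by right; exists x'].
- by move=> Hx; exists x; split => //; left.
- by move=> /IH [x' [x't Hx']]; exists x'; split => //; right.
Qed.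

Lemma up_closed (R : pzRingType) (M : lmodType R) (c : submod M -> submod M) C a b :
  closed_in (subspace (hull_kernel M) (closed_smod c)) C -> C a ->
  subm (proj1_sig a) (proj1_sig b) -> C b.
Proof.
move=> HC Ca ab; apply: NNPP => nb.
have [t [bt Ht]] := X_basis HC nb.
apply: (Ht a) => // x xt ax; apply: (bt x xt); exact: ab.
Qed.

Lemma pt_sub (R : pzRingType) (M : lmodType R) (c : submod M -> submod M) a b :
  pt_closure (subspace (hull_kernel M) (closed_smod c)) a b ->
  subm (proj1_sig a) (proj1_sig b).
Proof. by move=> H x ax; apply: (H (fun y => proj1_sig y x) (closed_single c x)). Qed.

Lemma sober (R : pzRingType) (M : lmodType R) (c : submod M -> submod M) Z :
  closure_operation c ->
  closed_in (subspace (hull_kernel M) (closed_smod c)) Z ->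
  irreducible (subspace (hull_kernel M) (closed_smod c)) Z ->
  exists! x, forall y, Z y <-> pt_closure (subspace (hull_kernel M) (closed_smod c)) x y.
Proof.
move=> [cext cmono cidem] HZ Zirr.
pose I := fun x : M => forall y : {N : submod M | closed_smod c N}, Z y -> proj1_sig y x.
have I0 : I 0%R by move=> y _; exact: smem0.
have ID : forall x y, I x -> I y -> I (x + y)%R.
  by move=> x y Ix Iy z Zz; apply: smemD; [apply: Ix|apply: Iy].
have IZ : forall (a : R) x, I x -> I (a *: x)%R.
  by move=> a x Ix z Zz; apply: smemZ; apply: Ix.
pose Is := @Submod R M I I0 ID IZ.
have gc : closed_smod c (c Is) by rewrite /closed_smod cidem.
pose g := exist (closed_smod c) (c Is) gc.
have Zg : Z g.
  apply: NNPP => nZ; have [t [bt Ht]] := X_basis HZ nZ.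
  have Hc : forall y, Z y -> exists x, List.In x t /\ proj1_sig y x.
    move=> y Zy; apply: NNPP => H; apply: (Ht y) => // x xt yx; apply: H; by exists x.
  have [x [xt Hx]] := irr_list Zirr Hc.
  by apply: (bt x xt); apply: cext; exact: Hx.
have Hg : forall y, Z y <-> pt_closure (subspace (hull_kernel M) (closed_smod c)) g y.
  move=> y; split.
    move=> Zy C HC Cg; apply: (up_closed HC Cg) => /=.
    rewrite (proj2_sig y); apply: cmono => x Ix; exact: Ix y Zy.
  by move=> H; apply: H.
exists g; split => // y' Hy'.
have Zy' : Z y' by apply/Hy' => C _.
have h1 := pt_sub (proj1 (Hg y') Zy').
have h2 := pt_sub (proj1 (Hy' g) Zg).
by apply: sig_eq; apply: submod_ext => x; split; [apply: h1|apply: h2].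
Qed.

Lemma qc_D (R : pzRingType) (M : lmodType R) (s : seq M) :
  quasi_compact (hull_kernel M) (fun N => ~ V_of s N).
Proof.
apply: (qc_union (l := List.map (fun x => bo [:: x]) s)).
  by move=> A /List.in_map_iff [x [<- _]]; exact: qc_hull_bo.
move=> N; split.
  move=> H; have [x [xs Nx]] : exists x, List.In x s /\ ~ N x.
    apply: NNPP => H'; apply: H => x xs; apply: NNPP => Nx; apply: H'; by exists x.
  exists (bo [:: x]); split; first by apply/List.in_map_iff; exists x.
  by move=> y [<-|[]].
move=> [A [/List.in_map_iff [x [<- xs]] bx]] HV.
by apply: (bx x); [left|apply: HV].
Qed.

Theorem proposition3p4 (R : comPzRingType) (M : lmodType R)
  (c : submod M -> submod M) :
  closure_operation c -> finite_type c ->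
  spectral (subspace (hull_kernel M) (closed_smod c)) /\
  closed_in (constructible (hull_kernel M)) (closed_smod c).
Proof.
move=> cl ft; have [cext cmono cidem] := cl; split.
  split.
  - exact: subspace_top (hull_top M).
  - apply: (qc_ext (K := fun y => bo [::] (proj1_sig y))); last exact: qc_X_W.
    by move=> y; split => // _ x [].
  - move=> Z HZ Zirr; exact: sober.
  - move=> U V HU qU HV qV.
    have [L1 E1] := qc_char HU qU; have [L2 E2] := qc_char HV qV.
    pose L3 := List.flat_map (fun u => List.map (fun v => u ++ v) L2) L1.
    apply: (qc_ext (K := fun y => exists w, List.In w L3 /\ bo w (proj1_sig y)));
      last exact: qc_X_union.
    move=> y; split.
      move=> [w [/List.in_flat_map [u [uL /List.in_map_iff [v [<- vL]]]] /bo_app [bu bv]]].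
      by split; [apply/E1; exists u| apply/E2; exists v].
    move=> [/E1 [u [uL bu]] /E2 [v [vL bv]]]; exists (u ++ v); split; last exact/bo_app.
    by apply/List.in_flat_map; exists u; split => //; apply/List.in_map_iff; exists v.
  - move=> U y HU Uy; have [t [bt Ht]] := X_basis HU Uy.
    exists (fun y => bo t (proj1_sig y)); split => //; [exact: W_open|exact: qc_X_W].
pose S' := fun U : submod M -> Prop =>
  (hull_kernel M U /\ quasi_compact (hull_kernel M) U) \/
  exists V, [/\ hull_kernel M V, quasi_compact (hull_kernel M) V & forall x, U x <-> ~ V x].
pose Cc := fun U : submod M -> Prop => generated S' U /\ forall N, U N -> ~ closed_smod c N.
apply: (@top_ext _ (generated S') (fun N => exists U, Cc U /\ U N)).
- exact: gen_top.
- move=> N; split; first by move=> [U [[_ HU] UN]]; apply: HU.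
  move=> nc.
  have [x [cx Nx]] : exists x, c N x /\ ~ N x.
    apply: NNPP => H; apply: nc; apply: submod_ext => x; split; first exact: cext.
    by move=> cx; apply: NNPP => Nx; apply: H; exists x.
  have [L [[s Hs] LN Lx]] := proj1 (ft N x) cx.
  exists (fun N' : submod M => V_of s N' /\ ~ N' x); split; last first.
    by split => // z zs; apply: LN; apply/Hs; apply: span_self.
  split.
    apply: (top_inter (gen_top S')).
      apply: gen_sub; right; exists (fun N => ~ V_of s N); split.
      + exact: Ds_open.
      + exact: qc_D.
      + by move=> N'; split => [H H'|H]; [apply: H'|apply: NNPP].
    apply: gen_sub; left; split; first exact: D1_open.
    apply: (qc_ext (K := bo [:: x])); last exact: qc_hull_bo.
    by move=> N'; split => [H|H y [<-|[]]] //; apply: H; left.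
  move=> N' [sN' N'x] EN'; apply: N'x; rewrite EN'.
  apply: (cmono L N') => // y /Hs; exact: span_sub.
- apply: (top_union (gen_top S')).
  by move=> U [].
Qed.
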